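(* Let $K$ be an algebraically closed field, let $f\colon\mathbb Z^k\to K$ be a hypergeometric term on $\mathbb Z^k$, and suppose $f$ is factorial on a region $\mathcal R\subset\mathbb Z^k$. Then there exist a vector $\boldsymbol\gamma=(\gamma_1,\dots,\gamma_k)\in K^k$, constants $m_1,\dots,m_p,n_1,\dots,n_q\in K$, vectors $\vec v_1,\dots,\vec v_p,\vec w_1,\dots,\vec w_q\in\mathbb Z^k$ and integers $r_1,\dots,r_p,s_1,\dots,s_q$ such that for all $\vec z\in\mathcal R$: (1) $f(\vec z)=\gamma_1^{z_1}\cdots\gamma_k^{z_k}\,\dfrac{\prod_{i=1}^p(m_i)_{\vec v_i\cdot\vec z+r_i}}{\prod_{j=1}^q(n_j)_{\vec w_j\cdot\vec z+s_j}}$; (2) $\vec v_i\cdot\vec z+r_i$ and $\vec w_j\cdot\vec z+s_j$ are positive integers for all $i\in\{1,\dots,p\}$, $j\in\{1,\dots,q\}$; (3) all the terms appearing in the numerator and denominator are nonzero.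
   Context: A hypergeometric term on $\mathbb Z^k$ over $K$ is a function $f\colon\mathbb Z^k\to K$ such that for each $i$ there are nonzero polynomials $A_i,B_i\in K[\vec z]$ with $A_i(\vec z)f(\vec z)=B_i(\vec z)f(\vec z+\vec e_i)$ for all $\vec z\in\mathbb Z^k$. $f$ is factorial on a region $\mathcal R\subset\mathbb Z^k$ if there exist a finite set $V\subset\mathbb Z^k$, and for each $\vec v\in V$ univariate polynomials $a_{\vec v},b_{\vec v}\in K[z]$ and an integer $n_{\vec v}$, such that for all $\vec z\in\mathcal R$: $f(\vec z)=\prod_{\vec v\in V}\prod_{j=1}^{\vec v\cdot\vec z+n_{\vec v}}a_{\vec v}(j)/b_{\vec v}(j)$; each $\vec v\cdot\vec z+n_{\vec v}$ is a positive integer; and $a_{\vec v}(j)\ne0$, $b_{\vec v}(j)\ne0$ for $1\le j\le\vec v\cdot\vec z+n_{\vec v}$. The Pochhammer symbol is $(m)_r=m(m+1)\cdots(m+r-1)$. *)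

(* Defs.v *)
From HB Require Import structures.
From mathcomp Require Import all_boot all_order all_algebra.
From mathcomp Require Import mpoly.
Set Implicit Arguments. Unset Strict Implicit. Unset Printing Implicit Defensive.
Import Order.TTheory GRing.Theory Num.Theory.
Local Open Scope ring_scope.

(* Points of Z^k are functions 'I_k -> int; vectors used as data in
   finite families are finite functions {ffun 'I_k -> int} (an eqType). *)
Definition zpt (k : nat) := 'I_k -> int.

Definition zdot (k : nat) (v : 'I_k -> int) (z : zpt k) : int :=
  \sum_(i < k) v i * z i.

Definition zshift (k : nat) (z : zpt k) (i : 'I_k) : zpt k :=
  fun j => z j + (j == i)%:R.

Definition zembed (K : nzRingType) (k : nat) (z : zpt k) : 'I_k -> K :=
  fun j => (z j)%:~R.

Definition hypergeometric (K : fieldType) (k : nat) (f : zpt k -> K) : Prop :=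
  forall i : 'I_k, exists A B : {mpoly K[k]},
    A != 0 /\ B != 0 /\
    forall z : zpt k,
      A.@[zembed K z] * f z = B.@[zembed K z] * f (zshift z i).

(* f is factorial on the region R.  The finite set V is given as a
   duplicate-free list of entries (v, a_v, b_v, n_v). *)
Definition factorial_on (K : fieldType) (k : nat) (f : zpt k -> K)
    (R : zpt k -> Prop) : Prop :=
  exists V : seq ({ffun 'I_k -> int} * {poly K} * {poly K} * int),
    uniq [seq e.1.1.1 | e <- V] /\
    forall z : zpt k, R z ->
      [/\ f z = \prod_(e <- V)
                 \prod_(1 <= j < (absz (zdot e.1.1.1 z + e.2)).+1)
                    (e.1.1.2.[j%:R] / e.1.2.[j%:R]),
          forall e, e \in V -> 0 < zdot e.1.1.1 z + e.2
        & forall e, e \in V -> forall j : nat,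
            ((1 <= j)%N && (j <= absz (zdot e.1.1.1 z + e.2)%R)%N) ->
            e.1.1.2.[j%:R] != 0 /\ e.1.2.[j%:R] != 0].

Definition poch (K : nzRingType) (m : K) (r : nat) : K :=
  \prod_(i < r) (m + i%:R).

(* Main.v *)
Require Import Defs.
From HB Require Import structures.
From mathcomp Require Import all_boot all_order all_algebra.
From mathcomp Require Import mpoly.
From mathcomp Require Import ring.
Import Order.TTheory GRing.Theory Num.Theory.
Local Open Scope ring_scope.

Section Helpers.
Context {K : closedFieldType}.

Definition rt (p : {poly K}) : seq K := sval (closed_field_poly_normal p).

Lemma rtE p : p = lead_coef p *: \prod_(z <- rt p) ('X - z%:P).
Proof. exact: (svalP (closed_field_poly_normal p)). Qed.

Lemma prod_eval (p : {poly K}) (N : nat) :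
  \prod_(1 <= j < N.+1) p.[j%:R] =
  lead_coef p ^+ N * \prod_(a <- rt p) poch (1 - a) N.
Proof.
rewrite big_add1 /= big_mkord.
transitivity (\prod_(i < N) (lead_coef p * \prod_(a <- rt p) ((i.+1)%:R - a))).
  apply: eq_bigr => i _; rewrite {1}(rtE p) hornerZ horner_prod; congr (_ * _).
  by apply: eq_bigr => a _; rewrite hornerXsubC.
rewrite big_split /= prodr_const card_ord; congr (_ * _).
rewrite exchange_big /=; apply: eq_bigr => a _; rewrite /poch.
apply: eq_bigr => i _; rewrite -[i.+1]addn1 natrD; ring.
Qed.

Lemma root_ne (p : {poly K}) x a : p.[x] != 0 -> a \in rt p -> x - a != 0.
Proof.
move=> Hp Ha; apply/eqP => H; move/eqP: Hp; apply.
by rewrite (rtE p) hornerZ horner_prod (big_rem a Ha) /= hornerXsubC H mul0r mulr0.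
Qed.

Lemma prodXz (I : Type) (r : seq I) (F : I -> K) (n : int) :
  (\prod_(i <- r) F i) ^ n = \prod_(i <- r) F i ^ n.
Proof.
elim: r => [|x r IH]; rewrite ?big_nil ?big_cons; first exact: exp1rz.
rewrite -IH; exact: expfzMl.
Qed.

Lemma sumXz (I : Type) (r : seq I) (F : I -> int) (x : K) : x != 0 ->
  x ^ (\sum_(i <- r) F i) = \prod_(i <- r) x ^ F i.
Proof.
move=> Hx; elim: r => [|y r IH]; rewrite ?big_nil ?big_cons //.
rewrite -IH; exact: expfzDr.
Qed.

End Helpers.

Theorem lemmaB23 (K : closedFieldType) (k : nat) (f : zpt k -> K)
    (R : zpt k -> Prop) :
  hypergeometric f -> factorial_on f R ->
  exists (gamma : 'I_k -> K)
         (num : seq (K * {ffun 'I_k -> int} * int))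
         (den : seq (K * {ffun 'I_k -> int} * int)),
    forall z : zpt k, R z ->
      [/\ f z = (\prod_(i < k) gamma i ^ z i) *
                (\prod_(e <- num) poch e.1.1 (absz (zdot e.1.2 z + e.2))) /
                (\prod_(e <- den) poch e.1.1 (absz (zdot e.1.2 z + e.2))),
          (forall e, e \in num -> 0 < zdot e.1.2 z + e.2) /\
          (forall e, e \in den -> 0 < zdot e.1.2 z + e.2)
        & (forall e, e \in num -> forall j : nat,
             (j < absz (zdot e.1.2 z + e.2)%R)%N -> e.1.1 + j%:R != 0) /\
          (forall e, e \in den -> forall j : nat,
             (j < absz (zdot e.1.2 z + e.2)%R)%N -> e.1.1 + j%:R != 0)].
Proof.
move=> _ [V [_ HV]].
pose c (e : {ffun 'I_k -> int} * {poly K} * {poly K} * int) :=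
  lead_coef e.1.1.2 / lead_coef e.1.2.
exists (fun i => \prod_(e <- V) c e ^ (e.1.1.1 i)).
exists ((\prod_(e <- V) c e ^ e.2, [ffun _ => 0%R], 1%R) ::
   flatten [seq [seq (1 - al, e.1.1.1, e.2) | al <- rt e.1.1.2] | e <- V]).
exists (flatten [seq [seq (1 - be, e.1.1.1, e.2) | be <- rt e.1.2] | e <- V]).
move=> z Rz; have [Hf Hpos Hnz] := HV z Rz.
have Z0 : zdot [ffun _ : 'I_k => 0%R] z = 0.
  by rewrite /zdot big1 // => i _; rewrite ffunE mul0r.
have Hne : forall e, e \in V -> c e != 0.
  move=> e He.
  have h1 : ((1 <= 1)%N && (1 <= absz (zdot e.1.1.1 z + e.2)%R)%N).
    rewrite leqnn /= absz_gt0; apply/negP => /eqP E0.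
    by move: (Hpos e He); rewrite E0 ltxx.
  case: (Hnz e He 1%N h1) => ha hb.
  apply: mulf_neq0; last rewrite invr_eq0; rewrite lead_coef_eq0.
    by apply: contraNneq ha => ->; rewrite horner0.
  by apply: contraNneq hb => ->; rewrite horner0.
have HN : forall e, e \in V ->
    zdot e.1.1.1 z + e.2 = (absz (zdot e.1.1.1 z + e.2))%:Z.
  move=> e He; rewrite abszE; apply/esym/gtr0_norm; exact: Hpos.
split.
- rewrite Hf.
  transitivity (\prod_(e <- V) (c e ^ zdot e.1.1.1 z * c e ^ e.2 *
     \prod_(al <- rt e.1.1.2) poch (1 - al) (absz (zdot e.1.1.1 z + e.2)) /
     \prod_(be <- rt e.1.2) poch (1 - be) (absz (zdot e.1.1.1 z + e.2)))).
    apply: eq_big_seq => e He.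
    rewrite -expfzDr ?Hne //.
    set N := absz _.
    rewrite (_ : zdot e.1.1.1 z + e.2 = N%:Z); last exact: HN.
    rewrite prodf_div !prod_eval.
    change (c e ^ N%:Z) with (c e ^+ N).
    rewrite /c expr_div_n invfM; ring.
  rewrite prodf_div !big_split /=.
  rewrite big_cons Z0 add0r /= /poch big_ord1 addr0.
  rewrite !big_allpairs_dep /=.
  have G : \prod_(i < k) (\prod_(e <- V) c e ^ e.1.1.1 i) ^ z i =
           \prod_(e <- V) c e ^ zdot e.1.1.1 z.
    rewrite (eq_bigr (fun i : 'I_k => \prod_(e <- V) (c e ^ e.1.1.1 i) ^ z i));
      last by move=> i _; exact: prodXz.
    rewrite exchange_big /=; apply: eq_big_seq => e He.
    rewrite /zdot sumXz ?Hne //; apply: eq_bigr => i _; exact: exprz_exp.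
  rewrite G.
  by rewrite !mulrA.
- split.
    move=> e; rewrite inE; case/orP => [/eqP -> /= | ]; first by rewrite Z0.
    by move/allpairsPdep => [e0 [al [He0 Hal ->]]] /=; exact: Hpos.
  move=> e /allpairsPdep [e0 [al [He0 Hal Ee]]]; rewrite Ee /=; exact: Hpos.
- split.
    move=> e; rewrite inE; case/orP => [/eqP -> /= | ].
      move=> j; rewrite Z0 /= ltnS leqn0 => /eqP ->; rewrite addr0.
      rewrite prodf_seq_neq0; apply/allP => e1 He1 /=; exact: expfz_neq0 (Hne e1 He1).
    move/allpairsPdep => [e0 [al [He0 Hal ->]]] /= j Hj.
    case: (Hnz e0 He0 j.+1 Hj) => ha hb.
    have -> : 1 - al + j%:R = (j.+1)%:R - al by rewrite -[j.+1]addn1 natrD; ring.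
    exact: root_ne ha Hal.
  move=> e /allpairsPdep [e0 [al [He0 Hal Ee]]] j; rewrite Ee /= => Hj.
  case: (Hnz e0 He0 j.+1 Hj) => ha hb.
  have -> : 1 - al + j%:R = (j.+1)%:R - al by rewrite -[j.+1]addn1 natrD; ring.
  exact: root_ne hb Hal.
Qed.
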